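(* Let $G$ be a graph, $X_C \subseteq V(G)$, $z \geq 0$, and let $H$ be an $X_C$-certificate of order $z$ in $G$. Let $D$ be a connected component of $H - X_C$, let $H'$ be the connected component of $H$ containing $D$, and let $X_C' := X_C \cap V(H')$. Suppose that: (1) for each $x \in X_C'$ such that $H[\{x\} \cup V(D)]$ contains an odd cycle, there are at least $z$ connected components $D' \neq D$ of $H - X_C$ such that $H[\{x\} \cup V(D')]$ contains an odd cycle; and (2) for each pair of distinct $x, y \in X_C'$ and each parity $p \in \{0,1\}$, if $H[\{x,y\} \cup V(D)]$ contains an $(x,y)$-path of length congruent to $p$ modulo $2$, then there are at least $z$ connected components $D' \neq D$ of $H - X_C$ such that $H[\{x,y\} \cup V(D')]$ contains an $(x,y)$-path of length congruent to $p$ modulo $2$. Then $\mathrm{oct}(H) = \mathrm{oct}(H - V(D))$.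
   Context: $\mathrm{oct}(H)$ denotes the minimum size of a set $S\subseteq V(H)$ with $H - S$ bipartite. For $X_C \subseteq V(G)$, an $X_C$-certificate of order $z$ is a subgraph $H$ of $G$ such that $H - X_C$ is bipartite, $\mathrm{oct}(H)=|X_C|$, and each connected component $H'$ of $H$ has $|X_C\cap V(H')|\le z$. *)

(* Defs.v *)
From mathcomp Require Import all_boot.
Set Implicit Arguments. Unset Strict Implicit. Unset Printing Implicit Defensive.

(* A graph: a vertex set and an adjacency relation; edges are only counted
   between vertices of the vertex set (see [edgeb]). *)
Record graph (T : finType) := Graph { verts : {set T}; adj : rel T }.

Section Graphs.
Variable T : finType.
Implicit Types (g : graph T) (S : {set T}).

Definition edgeb g : rel T :=
  fun x y => [&& x \in verts g, y \in verts g & adj g x y].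

Definition wf_graph g : Prop :=
  (forall x y, adj g x y = adj g y x) /\ (forall x, ~~ adj g x x) /\
  (forall x y, adj g x y -> (x \in verts g) && (y \in verts g)).

Definition subgraph (H G : graph T) : Prop :=
  wf_graph H /\ verts H \subset verts G /\ (forall x y, adj H x y -> adj G x y).

Definition induced g S : graph T :=
  Graph (verts g :&: S) (fun x y => [&& adj g x y, x \in S & y \in S]).
Definition del g S : graph T := induced g (~: S).

Definition bipartiteb g : bool :=
  [exists f : {ffun T -> bool}, [forall x, forall y, edgeb g x y ==> (f x != f y)]].

Definition oct g : nat :=
  \big[minn/#|T|]_(S : {set T} | (S \subset verts g) && bipartiteb (del g S)) #|S|.

Definition component g (D : {set T}) : Prop :=
  exists2 x, x \in verts g & D = [set y | connect (edgeb g) x y].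

Definition has_odd_cycle g : Prop :=
  exists c : seq T, [/\ 3 <= size c, uniq c, cycle (edgeb g) c & odd (size c)].

Definition has_xy_path_parity g (x y : T) (p : bool) : Prop :=
  exists s : seq T, [/\ path (edgeb g) x s, last x s = y, uniq (x :: s)
                      & odd (size s) = p].

Definition certificate (G : graph T) (XC : {set T}) (z : nat) (H : graph T) : Prop :=
  [/\ subgraph H G, bipartiteb (del H XC), oct H = #|XC|
    & forall C, component H C -> #|XC :&: C| <= z].

Definition atleast_components g (z : nat) (D : {set T}) (P : {set T} -> Prop) : Prop :=
  exists F : {set {set T}}, z <= #|F| /\
    forall D', D' \in F -> [/\ component g D', D' != D & P D'].

End Graphs.

(* Main.v *)
Require Import Defs.
From mathcomp Require Import all_boot.
Set Implicit Arguments. Unset Strict Implicit. Unset Printing Implicit Defensive.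

Section Aux.
Variable T : finType.
Implicit Types (g : graph T) (S : {set T}).

Lemma bip_sub (g1 g2 : graph T) :
  (forall x y, edgeb g1 x y -> edgeb g2 x y) -> bipartiteb g2 -> bipartiteb g1.
Proof.
move=> sub /existsP[f /forallP Hf]; apply/existsP; exists f.
apply/forallP=> x; apply/forallP=> y; apply/implyP=> /sub e.
by have /forallP/(_ y)/implyP := Hf x; apply.
Qed.

Lemma bipP g : reflect (exists f : T -> bool, forall x y, edgeb g x y -> f x != f y) (bipartiteb g).
Proof.
apply: (iffP existsP) => [[f /forallP Hf]|[f Hf]].
  exists f => x y e. by have /forallP/(_ y)/implyP := Hf x; apply.
exists [ffun x => f x]; apply/forallP=> x; apply/forallP=> y; apply/implyP=> e.
by rewrite !ffunE Hf.
Qed.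

Lemma bigmin_le (P : pred {set T}) (F : {set T} -> nat) m j :
  P j -> \big[minn/m]_(i | P i) F i <= F j.
Proof.
move=> Pj; have : j \in index_enum {set T} by rewrite mem_index_enum.
elim: (index_enum _) => [|a r IH] //=; rewrite in_cons big_cons.
case/orP=> [/eqP<-|/IH h]; first by rewrite Pj geq_minl.
by case: (P a) => //; rewrite geq_min h orbT.
Qed.

Lemma bigmin_att (P : pred {set T}) (F : {set T} -> nat) m :
  let v := \big[minn/m]_(i | P i) F i in v = m \/ exists2 i, P i & v = F i.
Proof.
rewrite /=; apply: (big_ind (fun v => v = m \/ exists2 i, P i & v = F i)).
- by left.
- move=> x y Hx Hy; rewrite /minn; case: ifP => _; [exact: Hx|exact: Hy].
- by move=> i Pi; right; exists i.
Qed.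

Lemma del_bip_restrict g S : bipartiteb (del g S) -> bipartiteb (del g (S :&: verts g)).
Proof.
apply: bip_sub => x y; rewrite /edgeb /= !inE.
by case: (x \in verts g); case: (y \in verts g); case: (x \in S); case: (y \in S);
  rewrite ?andbF ?andbT.
Qed.

Lemma oct_le g S : bipartiteb (del g S) -> oct g <= #|S|.
Proof.
move=> b; apply: (@leq_trans #|S :&: verts g|).
  rewrite /oct; apply: (@bigmin_le (fun S => (S \subset verts g) && bipartiteb (del g S)) (fun S => #|S|) #|T| (S :&: verts g)).
  by rewrite subsetIr del_bip_restrict.
by rewrite subset_leq_card // subsetIl.
Qed.

Lemma del_all_bip g : bipartiteb (del g (verts g)).
Proof.
apply/bipP; exists (fun _ => true) => x y; rewrite /edgeb /= !inE.
by case: (x \in verts g).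
Qed.

Lemma oct_ex0 g : exists2 S, bipartiteb (del g S) & #|S| <= oct g.
Proof.
case: (bigmin_att (fun S => (S \subset verts g) && bipartiteb (del g S)) (fun S => #|S|) #|T|).
  move=> E; exists (verts g); first exact: del_all_bip.
  by rewrite /oct E max_card.
by case=> S /andP[_ b] E; exists S => //; rewrite /oct E.
Qed.

Lemma oct_ex g : exists S, [/\ S \subset verts g, bipartiteb (del g S) & #|S| <= oct g].
Proof.
have [S b le] := oct_ex0 g; exists (S :&: verts g); split.
- exact: subsetIr.
- exact: del_bip_restrict.
- apply: leq_trans le; apply: subset_leq_card; exact: subsetIl.
Qed.

End Aux.

Section Graph.
Variable T : finType.
Implicit Types (g : graph T) (S U K : {set T}).

Lemma edgeb_sym g : (forall x y, adj g x y = adj g y x) -> symmetric (edgeb g).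
Proof. by move=> s x y; rewrite /edgeb s; case: (x \in verts g); case: (y \in verts g). Qed.

Lemma induced_adj_sym g U : (forall x y, adj g x y = adj g y x) ->
  forall x y, adj (induced g U) x y = adj (induced g U) y x.
Proof. by move=> s x y /=; rewrite s; case: (x \in U); case: (y \in U); rewrite ?andbF. Qed.

Lemma edgeb_verts g x y : edgeb g x y -> (x \in verts g) && (y \in verts g).
Proof. by case/and3P=> -> ->. Qed.

Lemma comp_verts g K : component g K -> K \subset verts g.
Proof.
case=> r rv ->; apply/subsetP=> y; rewrite inE => c.
have cl : closed (edgeb g) (verts g).
  by move=> a b /edgeb_verts /andP[-> ->].
by rewrite -(closed_connect cl c).
Qed.

Lemma comp_closed g K : symmetric (edgeb g) -> component g K ->
  forall x y, edgeb g x y -> (x \in K) = (y \in K).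
Proof.
move=> s [r _ ->] x y e; rewrite !inE; apply/idP/idP => c.
  exact: connect_trans c (connect1 e).
apply: connect_trans c _; rewrite (sym_connect_sym s); exact: connect1.
Qed.

Lemma comp_eq g K1 K2 x : symmetric (edgeb g) -> component g K1 -> component g K2 ->
  x \in K1 -> x \in K2 -> K1 = K2.
Proof.
move=> s [r1 _ ->] [r2 _ ->]; rewrite !inE => c1 c2.
have c12 : connect (edgeb g) r1 r2.
  apply: connect_trans c1 _; by rewrite (sym_connect_sym s).
apply/setP=> y; rewrite !inE; apply/idP/idP => c.
  apply: connect_trans _ c; by rewrite (sym_connect_sym s).
exact: connect_trans c12 c.
Qed.

Lemma comp_disj g K1 K2 : symmetric (edgeb g) -> component g K1 -> component g K2 ->
  K1 != K2 -> [disjoint K1 & K2].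
Proof.
move=> s c1 c2 ne; apply/pred0P=> x /=; apply/negbTE/negP=> /andP[x1 x2].
by move: ne; rewrite (comp_eq s c1 c2 x1 x2) eqxx.
Qed.

Lemma color_path (e : rel T) (f : T -> bool) : (forall a b, e a b -> f a != f b) ->
  forall x s, path e x s -> f (last x s) = f x (+) odd (size s).
Proof.
move=> pf x s; elim: s x => [|y s IH] x /=; first by rewrite addbF.
case/andP=> exy /IH ->; move: (pf _ _ exy).
by case: (f x); case: (f y); case: (odd (size s)).
Qed.

Lemma color_cycle (e : rel T) (f : T -> bool) : (forall a b, e a b -> f a != f b) ->
  forall c, cycle e c -> ~~ odd (size c).
Proof.
move=> pf [|x s] //= /(color_path pf). rewrite last_rcons size_rcons /=.
by case: (f x); case: (odd (size s)).
Qed.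

Lemma disjoint_pick (F : {set {set T}}) (A : {set T}) :
  (forall D1 D2, D1 \in F -> D2 \in F -> D1 != D2 -> [disjoint D1 & D2]) ->
  #|A| < #|F| -> exists2 D', D' \in F & [disjoint D' & A].
Proof.
move=> dj lt.
case: (set_0Vmem A) => [A0|[a0 a0A]].
  have : 0 < #|F| by move: lt; rewrite A0 cards0.
  case/card_gt0P=> D' DF; exists D' => //; by rewrite A0 disjoint_sym disjoints_subset sub0set.
have [/existsP[D' /andP[DF dj']]|] := boolP [exists D' in F, [disjoint D' & A]].
  by exists D'.
rewrite negb_exists => /forallP H; exfalso.
pose h (D' : {set T}) := odflt a0 [pick a in D' :&: A].
have hP D' : D' \in F -> h D' \in D' :&: A.
  move=> DF; have := H D'; rewrite DF /= => nd.
  rewrite /h; case: pickP => //= none; exfalso; move: nd; apply/negP/negPn.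
  rewrite disjoint_subset; apply/subsetP=> y yD; rewrite inE; apply/negP=> yA.
  by have := none y; rewrite inE yD yA.
have inj : {in F &, injective h}.
  move=> D1 D2 F1 F2 E; apply/eqP/negPn/negP=> ne.
  have := dj _ _ F1 F2 ne; rewrite disjoints_subset => /subsetP/(_ (h D1)).
  have := hP _ F1; rewrite inE => /andP[-> _] /(_ isT).
  by have := hP _ F2; rewrite !inE -E => /andP[-> _].
have : #|h @: F| <= #|A|.
  apply: subset_leq_card; apply/subsetP=> y /imsetP[D' DF ->].
  by have := hP _ DF; rewrite inE => /andP[_].
by rewrite card_in_imset // leqNgt lt.
Qed.

End Graph.

Section Ext.
Variable T : finType.
Implicit Types (g : graph T) (S U K : {set T}).

Lemma glue g g1 g2 K :
  (forall x y, edgeb g x y -> (x \in K) = (y \in K)) ->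
  (forall x y, edgeb g x y -> x \in K -> edgeb g1 x y) ->
  (forall x y, edgeb g x y -> x \notin K -> edgeb g2 x y) ->
  bipartiteb g1 -> bipartiteb g2 -> bipartiteb g.
Proof.
move=> cl h1 h2 /bipP[f1 p1] /bipP[f2 p2]; apply/bipP.
exists (fun x => if x \in K then f1 x else f2 x) => x y e.
rewrite -(cl _ _ e); case: ifP => xK.
  by apply: p1; apply: h1.
by apply: p2; apply: h2 => //; rewrite xK.
Qed.

Lemma transfer H (D S1 U : {set T}) : (forall a, a \in U -> (a \notin D) && (a \notin S1)) ->
  forall a b, edgeb (induced H U) a b -> edgeb (del (del H D) S1) a b.
Proof.
move=> hU a b; rewrite /edgeb /= !inE => /and3P[/andP[av aU] /andP[bv bU] /and3P[e _ _]].
by move: (hU a aU) (hU b bU) => /andP[-> ->] /andP[-> ->]; rewrite av bv e.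
Qed.

Lemma induced_edge H U a b : edgeb H a b -> a \in U -> b \in U -> edgeb (induced H U) a b.
Proof. by rewrite /edgeb /= !inE => /and3P[-> -> ->] -> ->. Qed.

Lemma induced_sub H U a b : edgeb (induced H U) a b -> edgeb H a b.
Proof. by rewrite /edgeb /= !inE => /and3P[/andP[-> _] /andP[-> _] /and3P[-> _ _]]. Qed.

Lemma inner_path H (XC D : {set T}) d0 u : wf_graph H -> component (del H XC) D ->
  d0 \in D -> u \in D ->
  exists s, [/\ path (edgeb (del H XC)) d0 s, last d0 s = u, uniq (d0 :: s)
              & all (mem D) s].
Proof.
case=> s _ cD d0D uD.
have sy : symmetric (edgeb (del H XC)) by apply: edgeb_sym; apply: induced_adj_sym.
have : connect (edgeb (del H XC)) d0 u.
  case: cD d0D uD => r _ ->; rewrite !inE => c0 cu.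
  apply: connect_trans _ cu; by rewrite (sym_connect_sym sy).
case/connectP=> p pp ->; case: (shortenP pp) => p' pp' up' _.
exists p'; split => //; apply/allP=> y yp.
have : y \in d0 :: p' by rewrite inE yp orbT.
move/(path_connect pp') => c; by rewrite inE -(closed_connect (comp_closed sy cD) c).
Qed.

End Ext.

Section Ext2.
Variable T : finType.

Lemma extend (H : graph T) (XC D S1 : {set T}) (b g : T -> bool) :
  wf_graph H ->
  (forall u v, edgeb (del H XC) u v -> b u != b v) ->
  (forall u v, edgeb (del (del H D) S1) u v -> g u != g v) ->
  component (del H XC) D ->
  [disjoint D & S1] ->
  (forall x, x \in XC -> x \notin S1 -> (exists2 d, d \in D & edgeb H x d) ->
     has_odd_cycle (induced H (x |: D)) ->
     exists D', [/\ component (del H XC) D', D' != D, [disjoint D' & S1]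
                 & has_odd_cycle (induced H (x |: D'))]) ->
  (forall x y, x \in XC -> y \in XC -> x \notin S1 -> y \notin S1 -> x != y ->
     (exists2 d, d \in D & edgeb H x d) -> (exists2 d, d \in D & edgeb H y d) ->
     forall p, has_xy_path_parity (induced H ([set x; y] :|: D)) x y p ->
     exists D', [/\ component (del H XC) D', D' != D, [disjoint D' & S1]
                 & has_xy_path_parity (induced H ([set x; y] :|: D')) x y p]) ->
  bipartiteb (del H S1).
Proof.
move=> wf pb pg cD djD h1 h2.
have [adjs [irr adjv]] := wf.
have syH : symmetric (edgeb H) by apply: edgeb_sym.
have syX : symmetric (edgeb (del H XC)) by apply: edgeb_sym; apply: induced_adj_sym.
have DV : D \subset verts H :&: ~: XC := comp_verts cD.
have DnX a : a \in D -> a \notin XC.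
  by move=> /(subsetP DV); rewrite !inE => /andP[_].
have DinH a : a \in D -> a \in verts H.
  by move=> /(subsetP DV); rewrite !inE => /andP[].
have nbX u v : u \in D -> v \notin D -> edgeb H u v -> v \in XC.
  move=> uD vD e; apply/negPn/negP=> vX; move: vD; apply/negP/negPn.
  have e' : edgeb (del H XC) u v.
    move: e; rewrite /edgeb /= !inE => /and3P[-> -> ->] /=.
    by rewrite vX (DnX _ uD).
  by rewrite -(comp_closed syX cD e').
have noodd x D' : x \in XC -> x \notin S1 -> component (del H XC) D' -> D' != D ->
    [disjoint D' & S1] -> has_odd_cycle (induced H (x |: D')) -> False.
  move=> xX xS cD' ne dj' [c [_ _ cc oc]].
  have tr := @transfer T H D S1 (x |: D').
  have hU : forall a, a \in x |: D' -> (a \notin D) && (a \notin S1).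
    move=> a; rewrite !inE => /orP[/eqP->|aD'].
      by rewrite xS andbT; apply/negP=> /DnX; rewrite xX.
    have := comp_disj syX cD' cD ne; rewrite disjoints_subset => /subsetP/(_ a aD').
    rewrite inE => -> /=.
    by move: dj'; rewrite disjoints_subset => /subsetP/(_ a aD'); rewrite inE.
  have := color_cycle pg (sub_cycle (tr hU) cc); by rewrite oc.
have parity x y p D' : x \in XC -> y \in XC -> x \notin S1 -> y \notin S1 ->
    component (del H XC) D' -> D' != D ->
    [disjoint D' & S1] -> has_xy_path_parity (induced H ([set x; y] :|: D')) x y p ->
    g y = g x (+) p.
  move=> xX yX xS yS cD' ne dj' [s [ps ls _ os]].
  have tr := @transfer T H D S1 ([set x; y] :|: D').
  have hU : forall a, a \in [set x; y] :|: D' -> (a \notin D) && (a \notin S1).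
    move=> a; rewrite !inE => /orP[/orP[/eqP->|/eqP->]|aD'].
    - by rewrite xS andbT; apply/negP=> /DnX; rewrite xX.
    - by rewrite yS andbT; apply/negP=> /DnX; rewrite yX.
    have := comp_disj syX cD' cD ne; rewrite disjoints_subset => /subsetP/(_ a aD').
    rewrite inE => -> /=.
    by move: dj'; rewrite disjoints_subset => /subsetP/(_ a aD'); rewrite inE.
  have := color_path pg (sub_path (tr hU) ps); by rewrite ls os.
pose P (xd : T * T) := [&& xd.1 \in XC, xd.1 \notin S1, xd.2 \in D & edgeb H xd.1 xd.2].
pose pk := [pick xd | P xd].
pose t := if pk is Some xd then g xd.1 (+) b xd.2 (+) true else false.
have pkP xd : pk = Some xd -> P xd by rewrite /pk; case: pickP => // y Py [<-].
have pkN : pk = None -> forall xd, ~~ P xd.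
  by rewrite /pk; case: pickP => // none _ xd; rewrite none.
have key u v : u \in D -> v \notin D -> v \notin S1 -> edgeb H u v -> b u (+) t != g v.
  move=> uD vD vS e; have vX := nbX _ _ uD vD e.
  case E: pk => [[x0 d0]|]; last first.
    by have := pkN E (v, u); rewrite /P /= vX vS uD syH e.
  have := pkP _ E; rewrite /P /= => /and4P[x0X x0S d0D e0].
  have -> : t = g x0 (+) b d0 (+) true by rewrite /t E.
  have [s [ps ls us as_]] := inner_path wf cD d0D uD.
  have bu : b u = b d0 (+) odd (size s) by rewrite -ls; exact: color_path pb _ _ ps.
  have allD : all [pred a | a \in D] (d0 :: s) by rewrite /= d0D.
  have subr (U : {set T}) : D \subset U -> {in [pred a | a \in D] &, subrel (edgeb (del H XC)) (edgeb (induced H U))}.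
    move=> DU a c aD cD0 ee; apply: induced_edge; first exact: induced_sub ee.
      exact: subsetP DU _ aD.
    exact: subsetP DU _ cD0.
  have x0nD : x0 \notin D by apply/negP=> /DnX; rewrite x0X.
  have s_nx x : x \notin D -> x \notin d0 :: s.
    move=> xD; apply/negP=> /(allP allD); rewrite inE; exact/negP.
  case: (eqVneq v x0) => [vx0|vx0].
    subst v; case: (eqVneq (b u) (b d0)) => [-> |ne].
      by case: (g x0); case: (b d0).
    exfalso.
    have osz : odd (size s) by move: ne; rewrite bu; case: (b d0); case: (odd (size s)).
    have U1 : D \subset x0 |: D by apply/subsetP=> a aD; rewrite !inE aD orbT.
    have hc : has_odd_cycle (induced H (x0 |: D)).
      exists (x0 :: d0 :: s); split.
      - by rewrite /= !ltnS; move: osz; case: (size s).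
      - by rewrite cons_uniq s_nx // us.
      - rewrite /= rcons_path; apply/and3P; split.
        + by apply: induced_edge => //; rewrite !inE ?eqxx ?d0D ?orbT.
        + apply: (sub_in_path (subr _ U1)) allD ps.
        + rewrite ls; apply: induced_edge; first exact: e.
            by rewrite !inE uD orbT.
          by rewrite !inE eqxx.
      - by rewrite /= osz.
    have [D' [cD' ne' dj' oc]] := h1 x0 x0X x0S (ex_intro2 _ _ d0 d0D e0) hc.
    exact: noodd cD' ne' dj' oc.
  have U2 : D \subset [set x0; v] :|: D by apply/subsetP=> a aD; rewrite !inE aD !orbT.
  have vnD : v \notin d0 :: s := s_nx _ vD.
  have hp : has_xy_path_parity (induced H ([set x0; v] :|: D)) x0 v (odd (size s)).
    exists (d0 :: rcons s v); split.
    - rewrite /= rcons_path; apply/and3P; split.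
      + by apply: induced_edge => //; rewrite !inE ?eqxx ?d0D ?orbT.
      + apply: (sub_in_path (subr _ U2)) allD ps.
      + rewrite ls; apply: induced_edge => //; by rewrite !inE ?eqxx ?uD ?orbT.
    - by rewrite /= last_rcons.
    - have := s_nx _ x0nD; rewrite inE negb_or => /andP[nx0d0 nx0s].
      move: vnD; rewrite inE negb_or => /andP[nvd0 nvs].
      move: us => /= /andP[nd0s us'].
      rewrite /= rcons_uniq !inE !negb_or mem_rcons !inE !negb_or nx0d0 nx0s (eq_sym x0 v) vx0.
      by rewrite mem_rcons !inE negb_or (eq_sym d0 v) nvd0 nd0s nvs us'.
    - by rewrite /= size_rcons /= negbK.
  have x0v : x0 != v by rewrite eq_sym.
  have [D' [cD' ne' dj' pp]] := h2 x0 v x0X vX x0S vS x0v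
     (ex_intro2 _ _ d0 d0D e0) (ex_intro2 _ _ u uD (etrans (syH _ _) e)) _ hp.
  rewrite (parity _ _ _ _ x0X vX x0S vS cD' ne' dj' pp) bu.
  by case: (g x0); case: (b d0); case: (odd (size s)).
apply/bipP; exists (fun v => if v \in D then b v (+) t else g v) => u v.
rewrite {1}/edgeb /= !inE => /and3P[/andP[uv uS] /andP[vv vS] /and3P[e _ _]].
have eH : edgeb H u v by rewrite /edgeb uv vv e.
case: ifP => uD; case: ifP => vD.
- have ee : edgeb (del H XC) u v.
    by rewrite /edgeb /= !inE uv vv e (DnX _ uD) (DnX _ vD).
  by move: (pb _ _ ee); case: (b u); case: (b v); case: (t).
- by apply: key => //; rewrite vD.
- by rewrite eq_sym; apply: key => //; [rewrite uD|rewrite syH].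
- apply: pg; by rewrite /edgeb /= !inE uv vv e uD vD uS vS.
Qed.

End Ext2.

Ltac bb := repeat match goal with
  | |- context [?x \in ?A] => case: (x \in A)
  | |- context [adj ?H ?x ?y] => case: (adj H x y) end.

Theorem mainTheorem7 (T : finType) (G : graph T) (XC : {set T}) (z : nat)
  (H : graph T) (D H'v : {set T}) :
  wf_graph G -> XC \subset verts G ->
  certificate G XC z H ->
  component (del H XC) D ->
  component H H'v -> D \subset H'v ->
  (forall x, x \in XC :&: H'v ->
     has_odd_cycle (induced H (x |: D)) ->
     atleast_components (del H XC) z D
       (fun D' => has_odd_cycle (induced H (x |: D')))) ->
  (forall x y, x \in XC :&: H'v -> y \in XC :&: H'v -> x != y ->
   forall p : bool,
     has_xy_path_parity (induced H ([set x; y] :|: D)) x y p ->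
     atleast_components (del H XC) z D
       (fun D' => has_xy_path_parity (induced H ([set x; y] :|: D')) x y p)) ->
  oct H = oct (del H D).
Proof.
move=> _ _ [[wfH _] bipX octH compB] cD cH DH hyp1 hyp2.
have [adjs _] := wfH.
have syH : symmetric (edgeb H) by apply: edgeb_sym.
have syX : symmetric (edgeb (del H XC)) by apply: edgeb_sym; apply: induced_adj_sym.
have clH := comp_closed syH cH.
have DV : D \subset verts H :&: ~: XC := comp_verts cD.
apply/eqP; rewrite eqn_leq; apply/andP; split; last first.
  have [S [_ bS leS]] := oct_ex H.
  apply: leq_trans leS; apply: oct_le; apply: bip_sub bS => x y.
  by rewrite /edgeb /= !inE => /and3P[/andP[/andP[-> _] ->] /andP[/andP[-> _] ->] /and3P[/and3P[-> _ _] _ _]].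
have [S [SV bS leS]] := oct_ex (del H D).
rewrite octH; apply: leq_trans leS; rewrite leqNgt; apply/negP => ltS.
have SnD a : a \in S -> a \notin D.
  by move=> /(subsetP SV); rewrite !inE => /andP[_ ->].
have zH : #|XC :&: H'v| <= z by apply: compB.
have cardS := cardsID H'v S.
have cardX := cardsID H'v XC.
have edH (g : graph T) (U : {set T}) x y : edgeb (induced g U) x y -> edgeb g x y := @induced_sub T g U x y.
case: (leqP #|XC :&: H'v| #|S :&: H'v|) => [caseA|caseB].
  pose T0 := (XC :&: H'v) :|: (S :\: H'v).
  have bT0 : bipartiteb (del H T0).
    apply: (@glue T _ (del H XC) (del (del H D) S) H'v).
    - by move=> x y /induced_sub /clH.
    - move=> x y e xK; have yK : y \in H'v by rewrite -(clH _ _ (induced_sub e)).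
      move: e; rewrite /edgeb /= !inE xK yK /= ?andbT ?orbF.
      by case: (x \in verts H); case: (y \in verts H); case: (x \in XC); case: (y \in XC); case: (adj H x y).
    - move=> x y e xK; have yK : y \notin H'v by rewrite -(clH _ _ (induced_sub e)).
      have xD : x \notin D by apply/negP=> /(subsetP DH); rewrite (negbTE xK).
      have yD : y \notin D by apply/negP=> /(subsetP DH); rewrite (negbTE yK).
      move: e; rewrite /edgeb /= !inE (negbTE xK) (negbTE yK) xD yD /= ?andbT.
      by bb.
    - exact: bipX.
    - exact: bS.
  have := oct_le bT0; rewrite octH => le.
  have : #|T0| <= #|S|.
    apply: leq_trans (leq_card_setU _ _) _; rewrite -cardS; exact: leq_add caseA (leqnn _).
  move=> le2; have := leq_trans le le2.
  by rewrite leqNgt ltS.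
pose S1 := (S :&: H'v) :|: (XC :\: H'v).
have bS1 : bipartiteb (del (del H D) S1).
  apply: (@glue T _ (del (del H D) S) (del H XC) H'v).
  - by move=> x y /induced_sub /induced_sub /clH.
  - move=> x y e xK; have yK : y \in H'v by rewrite -(clH _ _ (induced_sub (induced_sub e))).
    move: e; rewrite /edgeb /= !inE xK yK /= ?andbT.
    by bb.
  - move=> x y e xK; have yK : y \notin H'v by rewrite -(clH _ _ (induced_sub (induced_sub e))).
    move: e; rewrite /edgeb /= !inE (negbTE xK) (negbTE yK) /= ?andbT.
    by bb.
  - exact: bS.
  - exact: bipX.
have ltS1 : #|S1| < #|XC|.
  apply: leq_ltn_trans (leq_card_setU _ _) _; rewrite -cardX ltn_add2r; exact: caseB.
have pickD (P : {set T} -> Prop) : atleast_components (del H XC) z D P ->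
    exists D', [/\ component (del H XC) D', D' != D, [disjoint D' & S1] & P D'].
  case=> F [zF hF].
  have [D' DF dj] : exists2 D', D' \in F & [disjoint D' & S :&: H'v].
    apply: disjoint_pick; last exact: leq_trans caseB (leq_trans zH zF).
    move=> D1 D2 F1 F2 ne; have [c1 _ _] := hF _ F1; have [c2 _ _] := hF _ F2.
    exact: comp_disj syX c1 c2 ne.
  have [c' ne' P'] := hF _ DF; exists D'; split => //.
  rewrite disjoints_subset; apply/subsetP=> a aD'.
  have := comp_verts c'; move/subsetP/(_ a aD'); rewrite !inE => /andP[_ aX].
  move: dj; rewrite disjoints_subset => /subsetP/(_ a aD'); rewrite !inE => aS.
  by rewrite negb_or aS (negbTE aX) andbF.
have inH x d : d \in D -> edgeb H x d -> x \in H'v.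
  by move=> dD e; rewrite (clH _ _ e); apply: (subsetP DH).
have /bipP[bf pbf] := bipX.
have /bipP[gf pgf] := bS1.
have bH : bipartiteb (del H S1).
  apply: (@extend T H XC D S1 bf gf) => //.
  - rewrite disjoints_subset; apply/subsetP=> a aD; rewrite !inE negb_or.
    have aS : a \notin S by apply/negP=> /SnD; rewrite aD.
    by rewrite (negbTE aS) (subsetP DH _ aD).
  - move=> x xX xS [d dD e] oc; apply: pickD; apply: hyp1 oc.
    by rewrite inE xX (inH _ _ dD e).
  - move=> x y xX yX xS yS ne [d dD e] [d' dD' e'] p hp; apply: pickD; apply: hyp2 hp => //.
      by rewrite inE xX (inH _ _ dD e).
    by rewrite inE yX (inH _ _ dD' e').
have := oct_le bH; rewrite octH => le.
by move: le; rewrite leqNgt ltS1.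
Qed.
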